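(* Let $\mathbb{J}$ denote the class of join-semilattices having a least element. For $\mathbb{B}\subseteq\mathbb{J}$, let $\mathrm{Forb}(\mathbb{B})$ be the class of those $P\in\mathbb{J}$ which contain no join-subsemilattice isomorphic (as a join-semilattice) to a member of $\mathbb{B}$. For an order type $\alpha$, let $\mathbb{J}_{\alpha}$ be the class of $P\in\mathbb{J}$ such that the lattice $J(P)$ of ideals of $P$ contains a chain of order type $I(\alpha)$, and let $\mathbb{J}_{\neg\alpha}:=\mathbb{J}\setminus\mathbb{J}_{\alpha}$. Then for every order type $\alpha$ there is a subset $\mathbb{B}$ of $\mathbb{J}$ with $|\mathbb{B}|\le 2^{|\alpha|}$ such that $\mathbb{J}_{\neg\alpha}=\mathrm{Forb}(\mathbb{B})$.
   Context: An ideal of a poset $P$ is a non-empty up-directed initial segment of $P$; $J(P)$ is the set of ideals of $P$ ordered by inclusion. For a chain $C$ of order type $\alpha$, $I(\alpha)$ denotes the order type of the chain $I(C)$ of all initial segments of $C$ (including $\emptyset$ and $C$) ordered by inclusion; $|\alpha|$ is the cardinality of $C$. A join-subsemilattice of a join-semilattice is a subset closed under binary joins. *)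

(* Defs.v *)
(* A chain (linearly ordered set); an order type is represented by a chain. *)
Record Chain := {
  ctype :> Type;
  cle : ctype -> ctype -> Prop;
  cle_refl : forall x, cle x x;
  cle_trans : forall x y z, cle x y -> cle y z -> cle x z;
  cle_antisym : forall x y, cle x y -> cle y x -> x = y;
  cle_total : forall x y, cle x y \/ cle y x
}.

Record JSL := {
  jtype :> Type;
  jle : jtype -> jtype -> Prop;
  jjoin : jtype -> jtype -> jtype;
  jbot : jtype;
  jle_refl : forall x, jle x x;
  jle_trans : forall x y z, jle x y -> jle y z -> jle x z;
  jle_antisym : forall x y, jle x y -> jle y x -> x = y;
  jjoin_ubl : forall x y, jle x (jjoin x y);
  jjoin_ubr : forall x y, jle y (jjoin x y);
  jjoin_lub : forall x y z, jle x z -> jle y z -> jle (jjoin x y) z;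
  jbot_least : forall x, jle jbot x
}.

Definition subset {T : Type} (A B : T -> Prop) : Prop := forall x, A x -> B x.

Definition initial_segment (C : Chain) (S : C -> Prop) : Prop :=
  forall x y, S x -> cle C y x -> S y.

Definition ideal (P : JSL) (I : P -> Prop) : Prop :=
  (exists x, I x) /\
  (forall x y, I x -> jle P y x -> I y) /\
  (forall x y, I x -> I y -> exists z, I z /\ jle P x z /\ jle P y z).

(* P ∈ J_alpha (alpha the order type of C): the lattice J(P) of ideals,
   ordered by inclusion, contains a chain of order type I(alpha), i.e.
   there is an order embedding of I(C) (initial segments of C ordered by
   inclusion) into J(P). *)
Definition J_alpha (C : Chain) (P : JSL) : Prop :=
  exists f : (C -> Prop) -> (P -> Prop),
    (forall S, initial_segment C S -> ideal P (f S)) /\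
    (forall S T, initial_segment C S -> initial_segment C T ->
       (subset S T <-> subset (f S) (f T))).

Definition join_subsemilattice (P : JSL) (S : P -> Prop) : Prop :=
  forall x y, S x -> S y -> S (jjoin P x y).

Definition contains_copy (P Q : JSL) : Prop :=
  exists (S : P -> Prop) (f : Q -> P),
    join_subsemilattice P S /\
    (forall x, S (f x)) /\
    (forall x y, f x = f y -> x = y) /\
    (forall y, S y -> exists x, f x = y) /\
    (forall x y, f (jjoin Q x y) = jjoin P (f x) (f y)).

Definition Forb {I : Type} (B : I -> JSL) (P : JSL) : Prop :=
  forall i, ~ contains_copy P (B i).

(* Main.v *)
Require Import Defs.
From Stdlib Require Import Classical ClassicalEpsilon ProofIrrelevance List Arith Lia Cantor.
From mathcomp Require all_boot classical_sets boolp.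
Module ZW.
Import all_boot classical_sets boolp.
Lemma zorn_sets (T : Type) (P : (T -> Prop) -> Prop) :
  (forall F : (T -> Prop) -> Prop, (forall X, F X -> P X) ->
     (forall X Y, F X -> F Y -> (forall t, X t -> Y t) \/ (forall t, Y t -> X t)) ->
     P (fun t => exists X, F X /\ X t)) ->
  exists A, P A /\ forall B, (forall t, A t -> B t) -> P B -> forall t, B t -> A t.
Proof.
move=> H.
have [|A [PA maxA]] := @Zorn_bigcup T P.
  move=> F FP Ftot.
  have := H F FP (fun X Y FX FY => Ftot X Y FX FY).
  congr P; apply: funext => t; apply: propext; split.
    by move=> [X [FX Xt]]; exists X.
  by move=> [X FX Xt]; exists X.
exists A; split => // B AB PB t Bt.
apply: contrapT => nAt.
apply: (maxA B) => //; split => // BA; exact: nAt (BA t Bt).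
Qed.
End ZW.

Section Card.
Variable C : Type.
Variable e0 : nat -> C.
Hypothesis e0_inj : forall m n, e0 m = e0 n -> m = n.

Definition dom (G : (C*C)*C -> Prop) x := exists y z, G ((x,y),z).
Definition Good (G : (C*C)*C -> Prop) :=
  (forall p z z', G (p,z) -> G (p,z') -> z = z') /\
  (forall p p' z, G (p,z) -> G (p',z) -> p = p') /\
  (forall x y, dom G x -> dom G y -> exists z, G ((x,y),z)) /\
  (forall x y z, G ((x,y),z) -> dom G y /\ dom G z) /\
  (forall n, dom G (e0 n)).
Definition PP G := (forall t, ~ G t) \/ Good G.

Definition G0 (t : (C*C)*C) : Prop :=
  exists m n, t = ((e0 m, e0 n), e0 (to_nat (m,n))).

Lemma dom_G0 x : dom G0 x <-> exists m, x = e0 m.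
Proof.
split.
- intros [y [z [m [n H]]]]. injection H as -> _ _. eauto.
- intros [m ->]. exists (e0 0), (e0 (to_nat (m,0))). exists m, 0. reflexivity.
Qed.

Lemma Good_G0 : Good G0.
Proof.
refine (conj _ (conj _ (conj _ (conj _ _)))).
- intros p z z' [m [n H]] [m' [n' H']].
  injection H as Hp Hz. injection H' as Hp' Hz'. subst.
  injection Hp' as E1 E2. apply e0_inj in E1. apply e0_inj in E2. subst. reflexivity.
- intros p p' z [m [n H]] [m' [n' H']].
  injection H as Hp Hz. injection H' as Hp' Hz'. rewrite Hz in Hz'.
  apply e0_inj in Hz'. assert (Hz2 : to_nat (m,n) = to_nat (m',n')) by exact Hz'.
  assert (E := f_equal of_nat Hz2). rewrite !cancel_of_to in E.
  injection E as E1 E2. subst. reflexivity.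
- intros x y Hx Hy. apply dom_G0 in Hx as [m ->]. apply dom_G0 in Hy as [n ->].
  exists (e0 (to_nat (m,n))). exists m, n. reflexivity.
- intros x y z [m [n H]]. injection H as H1 H2 H3. subst. split; apply dom_G0; eauto.
- intros n. apply dom_G0. eauto.
Qed.

Lemma dom_mono (G H : (C*C)*C -> Prop) x : (forall t, G t -> H t) -> dom G x -> dom H x.
Proof. intros GH [y [z Hg]]. exists y, z. auto. Qed.

Lemma exists_max : exists M, Good M /\
  forall B, (forall t, M t -> B t) -> Good B -> forall t, B t -> M t.
Proof.
destruct (ZW.zorn_sets _ PP) as [M [PM maxM]].
- intros F FP Ftot.
  destruct (classic (exists X t, F X /\ X t)) as [[X0 [t0 [FX0 X0t]]]|Hn].
  2:{ left. intros t [X [FX Xt]]. apply Hn. eauto. }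
  right.
  assert (GX : forall X t, F X -> X t -> Good X).
  { intros X t FX Xt. destruct (FP X FX) as [E|G]; auto. exfalso; eapply E; eauto. }
  set (U := fun t => exists X, F X /\ X t).
  assert (UX : forall X t, F X -> X t -> U t) by (intros; exists X; auto).
  assert (common : forall X Y t s, F X -> F Y -> X t -> Y s ->
     exists Z, F Z /\ Good Z /\ Z t /\ Z s /\ (forall u, X u -> Z u) /\ (forall u, Y u -> Z u)).
  { intros X Y t s FX FY Xt Ys. destruct (Ftot X Y FX FY) as [XY|YX].
    - exists Y. split; [auto|split; [eauto|split; [auto|split; [auto|split; auto]]]].
    - exists X. split; [auto|split; [eauto|split; [auto|split; [auto|split; auto]]]]. }
  assert (domU : forall x, dom U x -> exists X, F X /\ Good X /\ dom X x).
  { intros x [y [z [X [FX Xt]]]]. exists X. split; [auto|split; [eauto|]]. exists y, z; auto. }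
  refine (conj _ (conj _ (conj _ (conj _ _)))).
  + intros p z z' [X [FX Xt]] [Y [FY Yt]].
    destruct (common X Y _ _ FX FY Xt Yt) as [Z [_ [[G1 _] [Zt [Zs _]]]]]. eauto.
  + intros p p' z [X [FX Xt]] [Y [FY Yt]].
    destruct (common X Y _ _ FX FY Xt Yt) as [Z [_ [[_ [G2 _]] [Zt [Zs _]]]]]. eauto.
  + intros x y Hx Hy. destruct (domU x Hx) as [X [FX [_ [y1 [z1 Hx1]]]]].
    destruct (domU y Hy) as [Y [FY [_ [y2 [z2 Hy2]]]]].
    destruct (common X Y _ _ FX FY Hx1 Hy2) as [Z [FZ [[_ [_ [G3 _]]] [Zt [Zs _]]]]].
    destruct (G3 x y) as [z Hz]. exists y1, z1; auto. exists y2, z2; auto.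
    exists z. eauto.
  + intros x y z [X [FX Xt]]. destruct (GX X _ FX Xt) as [_ [_ [_ [G4 _]]]].
    destruct (G4 _ _ _ Xt). split; (eapply dom_mono; [|eauto]); intros; eauto.
  + intros n. destruct (GX X0 t0 FX0 X0t) as [_ [_ [_ [_ G5]]]].
    eapply dom_mono; [|apply G5]. intros; eauto.
- exists M. destruct PM as [E|G].
  + exfalso. eapply E.
    apply (maxM G0 (fun t H => False_ind _ (E t H)) (or_intror Good_G0)).
    exists 0, 0. reflexivity.
  + split; auto. intros B MB GB. apply maxM; [exact MB|right; exact GB].
Qed.


Lemma comparability (A : C -> Prop) :
  ~ (exists g : C -> C, (forall x, A x -> ~ A (g x)) /\
        (forall x y, A x -> A y -> g x = g y -> x = y)) ->
  exists k : C -> C, (forall x, ~ A x -> A (k x)) /\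
        (forall x y, ~ A x -> ~ A y -> k x = k y -> x = y).
Proof.
intros Hno.
set (PP2 := fun H : C*C -> Prop =>
  (forall x y, H (x,y) -> ~ A x /\ A y) /\
  (forall x y y', H (x,y) -> H (x,y') -> y = y') /\
  (forall x x' y, H (x,y) -> H (x',y) -> x = x')).
destruct (ZW.zorn_sets _ PP2) as [H [[H1 [H2 H3]] maxH]].
- intros F FP Ftot.
  assert (common : forall X Y t s, F X -> F Y -> X t -> Y s ->
     exists Z, F Z /\ Z t /\ Z s).
  { intros X Y t s FX FY Xt Ys. destruct (Ftot X Y FX FY) as [XY|YX].
    - exists Y. auto.
    - exists X. auto. }
  split; [|split].
  + intros x y [X [FX Xt]]. destruct (FP X FX) as [P1 _]. auto.
  + intros x y y' [X [FX Xt]] [Y [FY Yt]].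
    destruct (common X Y _ _ FX FY Xt Yt) as [Z [FZ [Zt Zs]]].
    destruct (FP Z FZ) as [_ [P2 _]]. eauto.
  + intros x x' y [X [FX Xt]] [Y [FY Yt]].
    destruct (common X Y _ _ FX FY Xt Yt) as [Z [FZ [Zt Zs]]].
    destruct (FP Z FZ) as [_ [_ P3]]. eauto.
- destruct (classic (forall x, ~ A x -> exists y, H (x,y))) as [Hall|Hn].
  + assert (Hk : forall x, exists y, ~ A x -> H (x,y)).
    { intros x. destruct (classic (A x)) as [Ax|nAx].
      - exists x. intros; contradiction.
      - destruct (Hall x nAx) as [y Hy]. exists y. auto. }
    exists (fun x => proj1_sig (constructive_indefinite_description _ (Hk x))).
    split.
    * intros x nAx. destruct (constructive_indefinite_description _ (Hk x)) as [y Hy].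
      simpl. apply (H1 x y); auto.
    * intros x x' nAx nAx'.
      destruct (constructive_indefinite_description _ (Hk x)) as [y Hy].
      destruct (constructive_indefinite_description _ (Hk x')) as [y' Hy'].
      simpl. intros ->. eapply H3; eauto.
  + exfalso. apply not_all_ex_not in Hn as [x0 Hx0].
    apply imply_to_and in Hx0 as [nAx0 Hx0].
    assert (Hsurj : forall y, A y -> exists x, H (x,y)).
    { intros y Ay. apply NNPP. intros Hny.
      set (H' := fun t => H t \/ t = (x0,y)).
      assert (HP : PP2 H').
      { split; [|split].
        - intros x y' [Ht|Ht]; [auto|]. injection Ht as -> ->. auto.
        - intros x y1 y2 [Ht1|Ht1] [Ht2|Ht2].
          + eauto.
          + injection Ht2 as -> ->. exfalso; apply Hx0; eauto.
          + injection Ht1 as -> ->. exfalso; apply Hx0; eauto.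
          + injection Ht1 as -> ->. injection Ht2 as ->. auto.
        - intros x1 x2 y' [Ht1|Ht1] [Ht2|Ht2].
          + eauto.
          + injection Ht2 as -> ->. exfalso; apply Hny; eauto.
          + injection Ht1 as -> ->. exfalso; apply Hny; eauto.
          + injection Ht1 as -> ->. injection Ht2 as ->. auto. }
      assert (Hin := maxH H' (fun t Ht => or_introl Ht) HP (x0,y) (or_intror eq_refl)).
      apply Hx0; eauto. }
    apply Hno.
    assert (Hg : forall y, exists x, A y -> H (x,y)).
    { intros y. destruct (classic (A y)) as [Ay|nAy].
      - destruct (Hsurj y Ay) as [x Hx]. exists x. auto.
      - exists y. intros; contradiction. }
    exists (fun y => proj1_sig (constructive_indefinite_description _ (Hg y))).
    split.
    * intros y Ay. destruct (constructive_indefinite_description _ (Hg y)) as [x Hx].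
      simpl. apply (H1 x y); auto.
    * intros y y' Ay Ay'.
      destruct (constructive_indefinite_description _ (Hg y)) as [x Hx].
      destruct (constructive_indefinite_description _ (Hg y')) as [x' Hx'].
      simpl. intros ->. eapply H2; eauto.
Qed.

Definition code2 (b b' : bool) : nat := (if b then 1 else 0) + (if b' then 2 else 0).
Lemma code2_inj b1 b2 c1 c2 : code2 b1 b2 = code2 c1 c2 -> b1 = c1 /\ b2 = c2.
Proof. destruct b1, b2, c1, c2; simpl; intros H; try discriminate; auto. Qed.

Lemma sq_inj : exists m : C*C -> C, forall p q, m p = m q -> p = q.
Proof.
destruct exists_max as [M [GM maxM]].
pose proof GM as [G1 [G2 [G3 [G4 G5]]]].
set (A := dom M).
assert (Hphi : forall x y, exists z, A x -> A y -> M ((x,y),z)).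
{ intros x y. destruct (classic (A x /\ A y)) as [[Ax Ay]|Hn].
  - destruct (G3 x y Ax Ay) as [z Hz]. exists z. auto.
  - exists x. intros Ax Ay. exfalso; auto. }
set (phi := fun x y => proj1_sig (constructive_indefinite_description _ (Hphi x y))).
assert (phiM : forall x y, A x -> A y -> M ((x,y), phi x y)).
{ intros x y. unfold phi. destruct (constructive_indefinite_description _ (Hphi x y)); auto. }
assert (phiA : forall x y, A x -> A y -> A (phi x y)).
{ intros x y Ax Ay. apply (G4 x y). auto. }
assert (phi_inj : forall x y x' y', A x -> A y -> A x' -> A y' -> phi x y = phi x' y' ->
   x = x' /\ y = y').
{ intros x y x' y' Ax Ay Ax' Ay' E.
  assert (E2 := G2 _ _ _ (phiM x y Ax Ay) (eq_ind_r (fun z => M ((x',y'),z)) (phiM x' y' Ax' Ay') E)).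
  injection E2; auto. }
assert (A0 : forall n, A (e0 n)) by exact G5.
set (psi := fun (u v : C*bool) => phi (phi (fst u) (fst v)) (e0 (code2 (snd u) (snd v)))).
assert (psiA : forall u v, A (fst u) -> A (fst v) -> A (psi u v)).
{ intros u v Au Av. unfold psi. auto. }
assert (psi_inj : forall u v u' v', A (fst u) -> A (fst v) -> A (fst u') -> A (fst v') ->
   psi u v = psi u' v' -> u = u' /\ v = v').
{ intros [u bu] [v bv] [u' bu'] [v' bv'] Au Av Au' Av' E. unfold psi in E; simpl in *.
  apply phi_inj in E as [E1 E2]; auto.
  apply phi_inj in E1 as [-> ->]; auto.
  apply e0_inj, code2_inj in E2 as [-> ->]. auto. }
assert (Hnog : ~ (exists g : C -> C, (forall x, A x -> ~ A (g x)) /\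
        (forall x y, A x -> A y -> g x = g y -> x = y))).
{ intros [g [gA ginj]].
  set (B := fun x => exists u, A u /\ x = g u).
  assert (Hginv : forall x, exists u, B x -> A u /\ g u = x).
  { intros x. destruct (classic (B x)) as [[u [Au ->]]|nB].
    - exists u. auto.
    - exists x. intros; contradiction. }
  set (ginv := fun x => proj1_sig (constructive_indefinite_description _ (Hginv x))).
  assert (ginvP : forall x, B x -> A (ginv x) /\ g (ginv x) = x).
  { intros x. unfold ginv. destruct (constructive_indefinite_description _ (Hginv x)); auto. }
  assert (BnA : forall x, B x -> ~ A x).
  { intros x [u [Au ->]]. auto. }
  set (h := fun x => if excluded_middle_informative (A x) then (x,false) else (ginv x, true)).
  assert (hA : forall x, A x -> h x = (x,false)).
  { intros x Ax. unfold h. destruct (excluded_middle_informative (A x)); tauto. }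
  assert (hB : forall x, B x -> h x = (ginv x,true)).
  { intros x Bx. unfold h. destruct (excluded_middle_informative (A x)); auto.
    exfalso; eapply BnA; eauto. }
  assert (hfst : forall x, A x \/ B x -> A (fst (h x))).
  { intros x [Ax|Bx]; [rewrite hA|rewrite hB]; simpl; auto. apply ginvP; auto. }
  assert (hinj : forall x y, A x \/ B x -> A y \/ B y -> h x = h y -> x = y).
  { intros x y [Ax|Bx] [Ay|By].
    - rewrite !hA; auto. intros E; injection E; auto.
    - rewrite hA, hB; auto. discriminate.
    - rewrite hB, hA; auto. discriminate.
    - rewrite !hB; auto. intros E; injection E as E.
      rewrite <- (proj2 (ginvP x Bx)), <- (proj2 (ginvP y By)), E. auto. }
  set (N := fun t : (C*C)*C => exists x y, t = ((x,y), g (psi (h x) (h y))) /\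
      (A x \/ B x) /\ (A y \/ B y) /\ ~ (A x /\ A y)).
  set (M' := fun t => M t \/ N t).
  assert (domM' : forall x, dom M' x <-> A x \/ B x).
  { intros x; split.
    - intros [y [z [Ht|[x1 [y1 [E [Hx [Hy _]]]]]]]].
      + left. exists y, z. auto.
      + injection E as -> -> _. auto.
    - intros [Ax|Bx].
      + destruct Ax as [y [z Hz]]. exists y, z. left; auto.
      + exists x, (g (psi (h x) (h x))). right. exists x, x.
        split; [reflexivity|]. split; [auto|split; [auto|]].
        intros [Ax _]. eapply BnA; eauto. }
  assert (NnotA : forall x y z, N ((x,y),z) -> ~ A x \/ ~ A y).
  { intros x y z [x1 [y1 [E [_ [_ Hn]]]]]. injection E as -> -> _.
    apply not_and_or; auto. }
  assert (Nz : forall x y z, N ((x,y),z) -> B z /\ z = g (psi (h x) (h y)) /\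
      (A x \/ B x) /\ (A y \/ B y)).
  { intros x y z [x1 [y1 [E [Hx [Hy _]]]]]. injection E as -> -> ->.
    split; [|split; auto]. exists (psi (h x1) (h y1)). split; auto. }
  assert (MA : forall x y z, M ((x,y),z) -> A x /\ A y /\ A z).
  { intros x y z Hm. destruct (G4 _ _ _ Hm). split; auto. exists y, z; auto. }
  assert (GM' : Good M').
  { refine (conj _ (conj _ (conj _ (conj _ _)))).
    - intros [x y] z z' [H1|H1] [H2|H2].
      + eauto.
      + exfalso. destruct (MA _ _ _ H1) as [Ax [Ay _]]. destruct (NnotA _ _ _ H2); auto.
      + exfalso. destruct (MA _ _ _ H2) as [Ax [Ay _]]. destruct (NnotA _ _ _ H1); auto.
      + destruct (Nz _ _ _ H1) as [_ [-> _]]. destruct (Nz _ _ _ H2) as [_ [-> _]]. auto.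
    - intros [x y] [x' y'] z [H1|H1] [H2|H2].
      + eauto.
      + exfalso. destruct (MA _ _ _ H1) as [_ [_ Az]]. destruct (Nz _ _ _ H2) as [Bz _].
        eapply BnA; eauto.
      + exfalso. destruct (MA _ _ _ H2) as [_ [_ Az]]. destruct (Nz _ _ _ H1) as [Bz _].
        eapply BnA; eauto.
      + destruct (Nz _ _ _ H1) as [_ [E1 [Hx Hy]]].
        destruct (Nz _ _ _ H2) as [_ [E2 [Hx' Hy']]].
        rewrite E1 in E2. apply ginj in E2; try (apply psiA; auto).
        apply psi_inj in E2 as [E3 E4]; auto.
        apply hinj in E3; auto. apply hinj in E4; auto. subst; auto.
    - intros x y Hx Hy. apply domM' in Hx. apply domM' in Hy.
      destruct (classic (A x /\ A y)) as [[Ax Ay]|Hn].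
      + exists (phi x y). left. auto.
      + exists (g (psi (h x) (h y))). right. exists x, y. auto.
    - intros x y z [H1|H1].
      + destruct (MA _ _ _ H1) as [_ [Ay Az]]. split; apply domM'; auto.
      + destruct (Nz _ _ _ H1) as [Bz [_ [_ Hy]]]. split; apply domM'; auto.
    - intros n. apply domM'. auto. }
  assert (Bx : B (g (e0 0))) by (exists (e0 0); auto).
  assert (HN : M' ((g (e0 0), g (e0 0)), g (psi (h (g (e0 0))) (h (g (e0 0)))))).
  { right. exists (g (e0 0)), (g (e0 0)). split; [reflexivity|]. split; [auto|split; [auto|]].
    intros [Ax _]. eapply BnA; eauto. }
  apply (maxM M' (fun t Ht => or_introl Ht) GM') in HN.
  destruct (MA _ _ _ HN) as [Ax _]. eapply BnA; eauto. }
destruct (comparability A Hnog) as [k [kA kinj]].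
set (chi := fun x => if excluded_middle_informative (A x) then (x,false) else (k x, true)).
assert (chiA : forall x, A (fst (chi x))).
{ intros x. unfold chi. destruct (excluded_middle_informative (A x)); simpl; auto. }
assert (chiinj : forall x y, chi x = chi y -> x = y).
{ intros x y. unfold chi.
  destruct (excluded_middle_informative (A x)), (excluded_middle_informative (A y));
    intros E; injection E; try discriminate; auto. }
exists (fun p => psi (chi (fst p)) (chi (snd p))).
intros [x y] [x' y'] E. simpl in E.
apply psi_inj in E as [E1 E2]; auto. apply chiinj in E1. apply chiinj in E2. subst; auto.
Qed.
End Card.


Fixpoint jl (P : JSL) (l : list P) : P :=
  match l with nil => jbot P | x :: r => jjoin P x (jl P r) end.

Lemma jl_le (P : JSL) l q : jle P (jl P l) q <-> forall x, In x l -> jle P x q.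
Proof.
induction l as [|y r IH]; simpl; split.
- intros _ x [].
- intros _. apply jbot_least.
- intros H x [->|Hx].
  + eapply jle_trans; [apply jjoin_ubl|exact H].
  + apply IH; auto. eapply jle_trans; [apply jjoin_ubr|exact H].
- intros H. apply jjoin_lub; auto. apply IH. auto.
Qed.

Lemma jl_ub (P : JSL) l x : In x l -> jle P x (jl P l).
Proof. intros H. apply (proj1 (jl_le P l (jl P l))); auto. apply jle_refl. Qed.

Lemma jl_app (P : JSL) l l' : jl P (l ++ l') = jjoin P (jl P l) (jl P l').
Proof.
apply jle_antisym.
- apply jl_le. intros x Hx. apply in_app_or in Hx as [Hx|Hx].
  + eapply jle_trans; [apply jl_ub, Hx|apply jjoin_ubl].
  + eapply jle_trans; [apply jl_ub, Hx|apply jjoin_ubr].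
- apply jjoin_lub; apply jl_le; intros x Hx; apply jl_ub; apply in_or_app; auto.
Qed.

Lemma jl_map_le (C : Type) (P : JSL) (a : C -> P) l q :
  jle P (jl P (map a l)) q <-> forall x, In x l -> jle P (a x) q.
Proof.
rewrite jl_le. split.
- intros H x Hx. apply H. apply in_map. auto.
- intros H w Hw. apply in_map_iff in Hw as [x [<- Hx]]. auto.
Qed.

Lemma join_of_le (P : JSL) x y : jle P x y -> jjoin P x y = y.
Proof. intros H. apply jle_antisym. apply jjoin_lub; auto; apply jle_refl. apply jjoin_ubr. Qed.

Lemma join_of_ge (P : JSL) x y : jle P y x -> jjoin P x y = x.
Proof. intros H. apply jle_antisym. apply jjoin_lub; auto; apply jle_refl. apply jjoin_ubl. Qed.

Lemma ideal_bot (P : JSL) I : ideal P I -> I (jbot P).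
Proof. intros [[x Hx] [Hd _]]. eapply Hd; eauto. apply jbot_least. Qed.

Lemma ideal_join (P : JSL) I x y : ideal P I -> I x -> I y -> I (jjoin P x y).
Proof.
intros [_ [Hd Hdir]] Hx Hy. destruct (Hdir x y Hx Hy) as [z [Hz [H1 H2]]].
eapply Hd; eauto. apply jjoin_lub; auto.
Qed.

Lemma ideal_jl (P : JSL) I l : ideal P I -> (forall x, In x l -> I x) -> I (jl P l).
Proof.
intros HI. induction l as [|y r IH]; simpl; intros H.
- apply ideal_bot; auto.
- apply ideal_join; auto.
Qed.

Lemma embed_copy (P Q : JSL) (h : Q -> P) :
  (forall q q', jle Q q q' <-> jle P (h q) (h q')) ->
  (forall q q', h (jjoin Q q q') = jjoin P (h q) (h q')) ->
  contains_copy P Q.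
Proof.
intros Hle Hj. exists (fun p => exists q, h q = p), h.
split; [|split; [|split; [|split]]].
- intros x y [q <-] [q' <-]. exists (jjoin Q q q'). auto.
- intros x. eauto.
- intros x y E. apply jle_antisym; apply Hle; rewrite E; apply jle_refl.
- intros y [q <-]. eauto.
- auto.
Qed.

Lemma copy_embed (P Q : JSL) (f : Q -> P) :
  (forall x y, f x = f y -> x = y) ->
  (forall x y, f (jjoin Q x y) = jjoin P (f x) (f y)) ->
  forall q q', jle Q q q' <-> jle P (f q) (f q').
Proof.
intros finj fj q q'. split.
- intros H. rewrite <- (join_of_le _ _ _ H), fj. apply jjoin_ubl.
- intros H. assert (E : f (jjoin Q q q') = f q') by (rewrite fj; apply join_of_le; auto).
  apply finj in E. rewrite <- E. apply jjoin_ubl.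
Qed.

Lemma Jtrans (C : Chain) (P Q : JSL) : contains_copy P Q -> J_alpha C Q -> J_alpha C P.
Proof.
intros [S [f [_ [_ [finj [_ fj]]]]]] [F [Fid Femb]].
assert (Hle := copy_embed P Q f finj fj).
exists (fun T p => exists q, F T q /\ jle P p (f q)). split.
- intros T HT. destruct (Fid T HT) as [[q0 Hq0] [Hd Hdir]].
  split; [|split].
  + exists (f q0), q0. split; auto. apply jle_refl.
  + intros x y [q [Hq Hxq]] Hyx. exists q. split; auto. eapply jle_trans; eauto.
  + intros x y [q [Hq Hxq]] [q' [Hq' Hyq]]. destruct (Hdir q q' Hq Hq') as [z [Hz [H1 H2]]].
    exists (f z). split. exists z. split; auto. apply jle_refl.
    split; eapply jle_trans; eauto; apply Hle; auto.
- intros T U HT HU. rewrite (Femb T U HT HU). split.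
  + intros H p [q [Hq Hpq]]. exists q. auto.
  + intros H q Hq. destruct (H (f q)) as [q' [Hq' Hle']].
    exists q. split; auto. apply jle_refl.
    apply Hle in Hle'. destruct (Fid U HU) as [_ [Hd _]]. eapply Hd; eauto.
Qed.

Definition PropG (C : Chain) (Q : JSL) (a : C -> Q) :=
  forall S, initial_segment C S -> forall x l, ~ S x -> (forall y, In y l -> S y) ->
    ~ jle Q (a x) (jl Q (map a l)).

Lemma G_J (C : Chain) (Q : JSL) (a : C -> Q) : PropG C Q a -> J_alpha C Q.
Proof.
intros HG.
exists (fun S q => exists l, (forall y, In y l -> S y) /\ jle Q q (jl Q (map a l))).
split.
- intros S HS. split; [|split].
  + exists (jbot Q), nil. split. intros y []. apply jle_refl.
  + intros x y [l [Hl Hx]] Hyx. exists l. split; auto. eapply jle_trans; eauto.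
  + intros x y [l [Hl Hx]] [l' [Hl' Hy]]. exists (jl Q (map a (l ++ l'))). split.
    * exists (l ++ l'). split. intros z Hz. apply in_app_or in Hz as [Hz|Hz]; auto.
      apply jle_refl.
    * rewrite map_app, jl_app. split; eapply jle_trans; eauto.
      apply jjoin_ubl. apply jjoin_ubr.
- intros S T HS HT. split.
  + intros HST q [l [Hl Hq]]. exists l. split; auto.
  + intros H x Sx. apply NNPP. intros nTx.
    destruct (H (a x)) as [l [Hl Hle]].
    * exists (x :: nil). split. intros y [<-|[]]; auto. apply jl_ub. left; auto.
    * exact (HG T HT x l nTx Hl Hle).
Qed.

Section ChainJ.
Variable C : Chain.
Definition ole (o o' : option C) : Prop :=
  match o, o' with
  | None, _ => True
  | Some _, None => False
  | Some x, Some y => cle C x y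
  end.
Definition ojoin (o o' : option C) : option C :=
  match o, o' with
  | None, _ => o'
  | _, None => o
  | Some x, Some y => if excluded_middle_informative (cle C x y) then Some y else Some x
  end.
Lemma ole_refl o : ole o o. Proof. destruct o; simpl; auto. apply cle_refl. Qed.
Lemma ole_trans o1 o2 o3 : ole o1 o2 -> ole o2 o3 -> ole o1 o3.
Proof. destruct o1, o2, o3; simpl; auto; try tauto. apply cle_trans. Qed.
Lemma ole_antisym o1 o2 : ole o1 o2 -> ole o2 o1 -> o1 = o2.
Proof. destruct o1, o2; simpl; try tauto. intros; f_equal; apply cle_antisym; auto. Qed.
Lemma ole_total o1 o2 : ole o1 o2 \/ ole o2 o1.
Proof. destruct o1, o2; simpl; auto. apply cle_total. Qed.
Lemma ojoin_ubl o o' : ole o (ojoin o o').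
Proof.
destruct o as [x|], o' as [y|]; simpl; auto; try apply cle_refl.
destruct (excluded_middle_informative (cle C x y)); simpl; auto. apply cle_refl.
Qed.
Lemma ojoin_ubr o o' : ole o' (ojoin o o').
Proof.
destruct o as [x|], o' as [y|]; simpl; auto; try apply cle_refl.
destruct (excluded_middle_informative (cle C x y)); simpl; auto. apply cle_refl.
destruct (cle_total C x y); tauto.
Qed.
Lemma ojoin_lub o o' o'' : ole o o'' -> ole o' o'' -> ole (ojoin o o') o''.
Proof.
destruct o as [x|], o' as [y|]; simpl; auto.
destruct (excluded_middle_informative (cle C x y)); simpl; auto.
Qed.
Lemma obot_least o : ole None o. Proof. simpl; auto. Qed.

Definition chainJ : JSL :=
  {| jtype := option C; jle := ole; jjoin := ojoin; jbot := None;
     jle_refl := ole_refl; jle_trans := ole_trans; jle_antisym := ole_antisym;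
     jjoin_ubl := ojoin_ubl; jjoin_ubr := ojoin_ubr; jjoin_lub := ojoin_lub;
     jbot_least := obot_least |}.

Lemma ojoin_some x o o' : ole (Some x) (ojoin o o') -> ole (Some x) o \/ ole (Some x) o'.
Proof.
destruct o as [y|], o' as [z|]; simpl; auto.
destruct (excluded_middle_informative (cle C y z)); simpl; auto.
Qed.

Lemma chain_PropG : PropG C chainJ (fun x => Some x).
Proof.
intros S HS x l nSx Hl Hle.
assert (H : exists y, In y l /\ cle C x y).
{ clear Hl. induction l as [|y r IH].
  - destruct Hle.
  - change (ole (Some x) (ojoin (Some y) (jl chainJ (map (fun x => Some x) r)))) in Hle.
    destruct (ojoin_some x _ _ Hle) as [H|H].
    + exists y. simpl in H. split; [left; reflexivity|exact H].
    + destruct (IH H) as [z [Hz Hxz]]. exists z. split; [right|]; auto. }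
destruct H as [y [Hy Hxy]]. apply nSx. eapply HS; eauto.
Qed.

Lemma chain_J : J_alpha C chainJ.
Proof. eapply G_J. apply chain_PropG. Qed.
End ChainJ.

Definition down (C : Chain) (x : C) : C -> Prop := fun y => cle C y x.
Definition sdown (C : Chain) (x : C) : C -> Prop := fun y => cle C y x /\ y <> x.

Lemma init_down (C : Chain) x : initial_segment C (down C x).
Proof. intros y z Hy Hzy. unfold down in *. eapply cle_trans; eauto. Qed.
Lemma init_sdown (C : Chain) x : initial_segment C (sdown C x).
Proof.
intros y z [Hy Hne] Hzy. split. eapply cle_trans; eauto.
intros ->. apply Hne. apply cle_antisym; auto.
Qed.

Section Witness.
Variable C : Chain.
Variable P : JSL.
Variable F : (C -> Prop) -> (P -> Prop).
Hypothesis Fid : forall S, initial_segment C S -> ideal P (F S).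
Hypothesis Femb : forall S T, initial_segment C S -> initial_segment C T ->
       (subset S T <-> subset (F S) (F T)).

Lemma a_ex x : exists p, F (down C x) p /\ ~ F (sdown C x) p.
Proof.
apply NNPP. intros H.
assert (Hs : subset (F (down C x)) (F (sdown C x))).
{ intros p Hp. apply NNPP. intros Hn. apply H. eauto. }
apply Femb in Hs; try apply init_down; try apply init_sdown.
destruct (Hs x (cle_refl C x)). auto.
Qed.

Definition aw x := proj1_sig (constructive_indefinite_description _ (a_ex x)).
Lemma aw_spec x : F (down C x) (aw x) /\ ~ F (sdown C x) (aw x).
Proof. unfold aw. destruct (constructive_indefinite_description _ (a_ex x)); auto. Qed.

Lemma F_mono S T : initial_segment C S -> initial_segment C T -> subset S T -> subset (F S) (F T).
Proof. intros HS HT H. apply Femb; auto. Qed.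

Lemma in_sdown S x y : initial_segment C S -> ~ S x -> S y -> sdown C x y.
Proof.
intros HS nSx Sy. split.
- destruct (cle_total C y x); auto. exfalso. apply nSx. eapply HS; eauto.
- intros ->. auto.
Qed.

Lemma aw_sdown x y : sdown C x y -> F (sdown C x) (aw y).
Proof.
intros Hy. apply (F_mono (down C y)); try apply init_down; try apply init_sdown.
- intros z Hz. unfold down in Hz. destruct Hy as [Hyx Hne]. split.
  eapply cle_trans; eauto. intros ->. apply Hne. apply cle_antisym; auto.
- apply aw_spec.
Qed.

Lemma aw_PropG : PropG C P aw.
Proof.
intros S HS x l nSx Hl Hle.
apply (proj2 (aw_spec x)).
destruct (Fid (sdown C x) (init_sdown C x)) as [_ [Hd _]].
eapply Hd; [|exact Hle].
apply ideal_jl. apply Fid, init_sdown.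
intros w Hw. apply in_map_iff in Hw as [y [<- Hy]].
apply aw_sdown. eapply in_sdown; eauto.
Qed.

Fixpoint jlx (x : C) (l : list C) : P :=
  match l with
  | nil => jbot P
  | y :: r => if excluded_middle_informative (cle C y x) then jjoin P (aw y) (jlx x r) else jlx x r
  end.

Lemma jlx_le x l q : jle P (jlx x l) q <-> forall y, In y l -> cle C y x -> jle P (aw y) q.
Proof.
induction l as [|y r IH]; simpl.
- split. intros _ y []. intros _. apply jbot_least.
- destruct (excluded_middle_informative (cle C y x)) as [Hyx|Hyx]; split.
  + intros H z [<-|Hz] Hzx.
    * eapply jle_trans; [apply jjoin_ubl|eauto].
    * apply IH; auto. eapply jle_trans; [apply jjoin_ubr|eauto].
  + intros H. apply jjoin_lub; auto. apply IH. auto.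
  + intros H z [<-|Hz] Hzx. contradiction. apply IH; auto.
  + intros H. apply IH. auto.
Qed.

Lemma jlx_in x l : F (down C x) (jlx x l).
Proof.
induction l as [|y r IH]; simpl.
- apply ideal_bot. apply Fid, init_down.
- destruct (excluded_middle_informative (cle C y x)); auto.
  apply ideal_join; auto. apply Fid, init_down.
  apply (F_mono (down C y)); try apply init_down.
  intros z Hz. unfold down in *. eapply cle_trans; eauto.
  apply aw_spec.
Qed.

Lemma finite_copy : (forall x, exists l, forall y, cle C y x -> In y l) ->
  contains_copy P (chainJ C).
Proof.
intros Hfin.
set (L := fun x => proj1_sig (constructive_indefinite_description _ (Hfin x))).
assert (HL : forall x y, cle C y x -> In y (L x)).
{ intros x. unfold L. destruct (constructive_indefinite_description _ (Hfin x)); auto. }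
set (h := fun o : option C => match o with None => jbot P | Some x => jlx x (L x) end).
assert (ax_h : forall x, jle P (aw x) (h (Some x))).
{ intros x. simpl. assert (H := proj1 (jlx_le x (L x) (jlx x (L x))) (jle_refl _ _)).
  apply H. apply HL, cle_refl. apply cle_refl. }
assert (jlx_ub : forall z y l, In z l -> cle C z y -> jle P (aw z) (jlx y l)).
{ intros z y l Hz Hzy. exact (proj1 (jlx_le y l (jlx y l)) (jle_refl _ _) z Hz Hzy). }
assert (hx_sd : forall x y, sdown C x y -> F (sdown C x) (h (Some y))).
{ intros x y Hy. apply (F_mono (down C y)); try apply init_down; try apply init_sdown.
  - intros z Hz. unfold down in Hz. destruct Hy as [Hyx Hne]. split.
    eapply cle_trans; eauto. intros ->. apply Hne. apply cle_antisym; auto.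
  - apply jlx_in. }
assert (Hsd := fun x => Fid (sdown C x) (init_sdown C x)).
assert (Hle : forall o o', jle (chainJ C) o o' <-> jle P (h o) (h o')).
{ intros [x|] [y|].
  - change (cle C x y <-> jle P (h (Some x)) (h (Some y))). split.
    + intros Hxy. apply jlx_le. intros z Hz Hzx. apply jlx_ub. apply HL. eapply cle_trans; eauto.
      eapply cle_trans; eauto.
    + intros Hh. apply NNPP. intros nxy. apply (proj2 (aw_spec x)).
      destruct (Hsd x) as [_ [Hd _]]. eapply Hd; [|eapply jle_trans; [apply ax_h|exact Hh]].
      apply hx_sd. split. destruct (cle_total C x y); tauto. intros ->. apply nxy, cle_refl.
  - change (False <-> jle P (h (Some x)) (jbot P)). split; [intros []|].
    intros Hh. apply (proj2 (aw_spec x)).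
    destruct (Hsd x) as [_ [Hd _]]. eapply Hd; [|eapply jle_trans; [apply ax_h|exact Hh]].
    apply ideal_bot. auto.
  - change (True <-> jle P (jbot P) (h (Some y))). split; intros; [apply jbot_least|exact I].
  - change (True <-> jle P (jbot P) (jbot P)). split; intros; [apply jbot_least|exact I]. }
apply (embed_copy P (chainJ C) h Hle).
intros o o'. destruct (ole_total C o o') as [H|H].
- rewrite (join_of_le (chainJ C) o o' H). symmetry. apply join_of_le. apply Hle. exact H.
- rewrite (join_of_ge (chainJ C) o o' H). symmetry. apply join_of_ge. apply Hle. exact H.
Qed.
End Witness.

Section Sub.
Variables (C : Type) (P : JSL) (a : C -> P).
Definition gen (p : P) := exists l, p = jl P (map a l).
Lemma gen_join p q : gen p -> gen q -> gen (jjoin P p q).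
Proof. intros [l ->] [l' ->]. exists (l ++ l'). rewrite map_app, jl_app. reflexivity. Qed.
Lemma gen_bot : gen (jbot P). Proof. exists nil. reflexivity. Qed.
Definition sT := {p : P | gen p}.
Definition sle (x y : sT) := jle P (proj1_sig x) (proj1_sig y).
Definition sjoin (x y : sT) : sT :=
  exist _ (jjoin P (proj1_sig x) (proj1_sig y)) (gen_join _ _ (proj2_sig x) (proj2_sig y)).
Definition sbot : sT := exist _ (jbot P) gen_bot.
Lemma sig_eq (x y : sT) : proj1_sig x = proj1_sig y -> x = y.
Proof. destruct x as [x Hx], y as [y Hy]; simpl. intros ->. f_equal. apply proof_irrelevance. Qed.
Lemma sle_refl x : sle x x. Proof. apply jle_refl. Qed.
Lemma sle_trans x y z : sle x y -> sle y z -> sle x z. Proof. apply jle_trans. Qed.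
Lemma sle_antisym x y : sle x y -> sle y x -> x = y.
Proof. intros H1 H2. apply sig_eq. apply jle_antisym; auto. Qed.
Lemma sjoin_ubl x y : sle x (sjoin x y). Proof. apply jjoin_ubl. Qed.
Lemma sjoin_ubr x y : sle y (sjoin x y). Proof. apply jjoin_ubr. Qed.
Lemma sjoin_lub x y z : sle x z -> sle y z -> sle (sjoin x y) z. Proof. apply jjoin_lub. Qed.
Lemma sbot_least x : sle sbot x. Proof. apply jbot_least. Qed.
Definition subJ : JSL :=
  {| jtype := sT; jle := sle; jjoin := sjoin; jbot := sbot;
     jle_refl := sle_refl; jle_trans := sle_trans; jle_antisym := sle_antisym;
     jjoin_ubl := sjoin_ubl; jjoin_ubr := sjoin_ubr; jjoin_lub := sjoin_lub;
     jbot_least := sbot_least |}.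
Lemma gen_a x : gen (a x).
Proof. exists (x :: nil). simpl. symmetry. apply join_of_ge. apply jbot_least. Qed.
Definition a' (x : C) : subJ := exist _ (a x) (gen_a x).
Lemma val_jl l : proj1_sig (jl subJ (map a' l)) = jl P (map a l).
Proof. induction l as [|y r IH]; auto. change (jjoin P (a y) (proj1_sig (jl subJ (map a' r))) = jjoin P (a y) (jl P (map a r))). rewrite IH. reflexivity. Qed.
Lemma subJ_gen (q : subJ) : exists l, q = jl subJ (map a' l).
Proof.
destruct q as [p [l Hl]]. exists l. apply sig_eq. simpl. rewrite val_jl. auto.
Qed.
End Sub.

Lemma transfer (C : Type) (Q P : JSL) (a : C -> Q) (b : C -> P) :
  (forall q, exists l, q = jl Q (map a l)) ->
  (forall x l, jle Q (a x) (jl Q (map a l)) <-> jle P (b x) (jl P (map b l))) ->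
  contains_copy P Q.
Proof.
intros Hgen Hrel.
assert (key : forall l l', jle Q (jl Q (map a l)) (jl Q (map a l')) <->
                          jle P (jl P (map b l)) (jl P (map b l'))).
{ intros l l'. rewrite !jl_map_le. split; intros H x Hx; apply Hrel; auto. }
set (L := fun q => proj1_sig (constructive_indefinite_description _ (Hgen q))).
assert (HL : forall q, q = jl Q (map a (L q))).
{ intros q. unfold L. destruct (constructive_indefinite_description _ (Hgen q)); auto. }
set (h := fun q => jl P (map b (L q))).
assert (Hle : forall q q', jle Q q q' <-> jle P (h q) (h q')).
{ intros q q'. unfold h. rewrite <- key, <- (HL q), <- (HL q'). tauto. }
apply (embed_copy P Q h Hle).
intros q q'. unfold h.
rewrite <- jl_app, <- map_app.
assert (E : jl Q (map a (L (jjoin Q q q'))) = jl Q (map a (L q ++ L q'))).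
{ rewrite <- HL, map_app, jl_app, <- HL, <- HL. reflexivity. }
apply jle_antisym; apply key; rewrite E; apply jle_refl.
Qed.

Lemma infinite_e0 (C : Chain) :
  ~ (forall x, exists l, forall y, cle C y x -> In y l) ->
  exists e0 : nat -> C, forall m n, e0 m = e0 n -> m = n.
Proof.
intros Hn. apply not_all_ex_not in Hn as [x0 Hx0].
assert (Hp : forall l : list C, exists y, ~ In y l).
{ intros l. apply NNPP. intros H. apply Hx0. exists l. intros y _.
  apply NNPP. intros Hy. apply H. eauto. }
set (pick := fun l => proj1_sig (constructive_indefinite_description _ (Hp l))).
assert (pick_spec : forall l, ~ In (pick l) l).
{ intros l. unfold pick. destruct (constructive_indefinite_description _ (Hp l)); auto. }
set (Lst := fix Lst (n : nat) : list C := match n with 0 => nil | S k => pick (Lst k) :: Lst k end).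
exists (fun n => pick (Lst n)).
assert (Hin : forall n k, In (pick (Lst n)) (Lst (S n + k))).
{ intros n k. induction k as [|k IH].
  - rewrite Nat.add_0_r. simpl. left. reflexivity.
  - rewrite Nat.add_succ_r. simpl. right. exact IH. }
intros m n E. destruct (Nat.lt_trichotomy m n) as [H|[H|H]]; auto; exfalso.
- assert (Hk : n = S m + (n - S m)) by lia.
  apply (pick_spec (Lst n)). rewrite <- E. rewrite Hk. apply Hin.
- assert (Hk : m = S n + (m - S n)) by lia.
  apply (pick_spec (Lst m)). rewrite E. rewrite Hk. apply Hin.
Qed.

Lemma list_enc (C : Type) (e0 : nat -> C) (e0inj : forall m n, e0 m = e0 n -> m = n)
  (m : C * C -> C) (minj : forall p q, m p = m q -> p = q) :
  exists E : C * list C -> C, forall p q, E p = E q -> p = q.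
Proof.
set (fc := fix fc (l : list C) : C := match l with nil => e0 0 | x :: r => m (x, fc r) end).
assert (fc_inj : forall l l', length l = length l' -> fc l = fc l' -> l = l').
{ induction l as [|x r IH]; intros [|x' r'] Hlen E; simpl in *; try discriminate; auto.
  apply minj in E. injection E as -> E. f_equal. apply IH; auto. }
exists (fun p => m (fst p, m (e0 (length (snd p)), fc (snd p)))).
intros [x l] [x' l'] E. simpl in E. apply minj in E. injection E as -> E.
apply minj in E. injection E as E1 E2. apply e0inj in E1. f_equal. apply fc_inj; auto.
Qed.

Definition Rep (C : Chain) (E : C * list C -> C) (A : C -> Prop) (Q : JSL) (a : C -> Q) :=
  (forall q, exists l, q = jl Q (map a l)) /\
  (forall x l, A (E (x,l)) <-> jle Q (a x) (jl Q (map a l))).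
Definition good (C : Chain) (E : C * list C -> C) (A : C -> Prop) :=
  exists (Q : JSL) (a : C -> Q), Rep C E A Q a /\ PropG C Q a.

Theorem theorem0p3 :
  forall C : Chain,
    exists (I : Type) (B : I -> JSL) (code : I -> (C -> Prop)),
      (forall i j, code i = code j -> i = j) /\
      (forall P : JSL, ~ J_alpha C P <-> Forb B P).
Proof.
intros C.
destruct (classic (forall x, exists l, forall y, cle C y x -> In y l)) as [Hfin|Hinf].
- exists unit, (fun _ => chainJ C), (fun _ _ => True). split.
  + intros [] [] _; auto.
  + intros P. split.
    * intros nJ [] Hc. apply nJ. eapply Jtrans; eauto. apply chain_J.
    * intros Hf [F [Fid Femb]]. apply (Hf tt). eapply finite_copy; eauto.
- destruct (infinite_e0 C Hinf) as [e0 e0inj].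
  destruct (sq_inj C e0 e0inj) as [m minj].
  destruct (list_enc C e0 e0inj m minj) as [E Einj].
  set (I := {A : C -> Prop | good C E A}).
  set (B := fun i : I => proj1_sig (constructive_indefinite_description _ (proj2_sig i))).
  assert (HB : forall i : I, exists a, Rep C E (proj1_sig i) (B i) a /\ PropG C (B i) a).
  { intros i. unfold B. destruct (constructive_indefinite_description _ (proj2_sig i)); auto. }
  exists I, B, (fun i => proj1_sig i). split.
  + intros [A HA] [A' HA']. simpl. intros ->. f_equal. apply proof_irrelevance.
  + intros P. split.
    * intros nJ i Hc. apply nJ. eapply Jtrans; eauto.
      destruct (HB i) as [a [_ HG]]. eapply G_J; eauto.
    * intros Hf [F [Fid Femb]].
      set (a := aw C P F Femb).
      assert (HaG : PropG C P a) by (apply aw_PropG; auto).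
      set (AP := fun z => exists x l, z = E (x,l) /\ jle P (a x) (jl P (map a l))).
      assert (HAP : forall x l, AP (E (x,l)) <-> jle P (a x) (jl P (map a l))).
      { intros x l. split.
        - intros [x' [l' [Ez H]]]. apply Einj in Ez. injection Ez as -> ->. auto.
        - intros H. exists x, l. auto. }
      assert (Hgood : good C E AP).
      { exists (subJ C P a), (a' C P a). split; [split|].
        - apply subJ_gen.
        - intros x l. rewrite HAP. change (jle P (a x) (jl P (map a l)) <->
             jle P (a x) (proj1_sig (jl (subJ C P a) (map (a' C P a) l)))).
          rewrite val_jl. tauto.
        - intros S HS x l nSx Hl Hle.
          change (jle P (a x) (proj1_sig (jl (subJ C P a) (map (a' C P a) l)))) in Hle.
          rewrite val_jl in Hle. eapply HaG; eauto. }
      apply (Hf (exist _ AP Hgood)).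
      destruct (HB (exist _ AP Hgood)) as [a2 [[Hgen Hrep] _]]. simpl in Hrep.
      apply (transfer C (B (exist _ AP Hgood)) P a2 a Hgen).
      intros x l. rewrite <- Hrep. apply HAP.
Qed.
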